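(* Let $G$ be a connected graph with adjacency matrix $A$ and positive degrees, and let $e=(i,j)$, $i\ne j$, $a_{ij}>0$, be a cut-edge of $G$. Then for every $r>0$, \[ c_r(e)\le r^{-1}. \]
   Context: Graphs are undirected and possibly weighted on vertex set $\{1,\dots,n\}$, with symmetric nonnegative adjacency matrix $A=(a_{k\ell})$; $d=A\mathbf 1$, $D=\mathrm{diag}(d)$, $\|d\|_1=\sum_kd_k$, $D^{\pm1/2}=\mathrm{diag}(d_k^{\pm1/2})$; $e_k$ is the $k$-th column of the identity and $\mathbf 1$ the all-ones vector. The edge $e$ is a cut-edge if deleting it disconnects $G$. With $v=e_i-e_j$ and $\widehat A=A+a_{ij}vv^T$ (deleting edge $e$ and adding loops of weight $a_{ij}$ at $i$ and $j$; $\widehat A\mathbf 1=d$). For $r>0$ and symmetric nonnegative $B$ with $B\mathbf 1=d$, $K_r(B)=\operatorname{Tr}\Big(\big((1+r)I-D^{-1/2}BD^{-1/2}+\tfrac{1}{\|d\|_1}D^{1/2}\mathbf 1\mathbf 1^TD^{1/2}\big)^{-1}\Big)-(1+r)^{-1}$; the regularized score is $c_r(e)=K_r(\widehat A)-K_r(A)$. *)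

(* Defs.v *)
From HB Require Import structures.
From mathcomp Require Import all_boot all_order all_algebra.
Set Implicit Arguments. Unset Strict Implicit. Unset Printing Implicit Defensive.
Import Order.TTheory GRing.Theory Num.Theory.
Local Open Scope ring_scope.

Section Defs.
Variables (R : rcfType) (n : nat).

(* weighted undirected graph on 'I_n given by its adjacency matrix *)
Definition symmetric_nonneg (A : 'M[R]_n) : Prop :=
  A^T = A /\ forall k l, 0 <= A k l.

Definition deg (A : 'M[R]_n) (k : 'I_n) : R := \sum_(l < n) A k l.

Definition vol (A : 'M[R]_n) : R := \sum_(k < n) deg A k.

Definition adjrel (A : 'M[R]_n) : rel 'I_n := fun k l => 0 < A k l.

Definition connected_graph (A : 'M[R]_n) : Prop :=
  forall k l : 'I_n, connect (adjrel A) k l.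

Definition delete_edge (A : 'M[R]_n) (i j : 'I_n) : 'M[R]_n :=
  \matrix_(k, l) (if ((k == i) && (l == j)) || ((k == j) && (l == i))
                  then 0 else A k l).

Definition cut_edge (A : 'M[R]_n) (i j : 'I_n) : Prop :=
  ~ connected_graph (delete_edge A i j).

Definition diagf (f : 'I_n -> R) : 'M[R]_n := diag_mx (\row_k f k).

Definition ones : 'cV[R]_n := const_mx 1.

Definition evec (i j : 'I_n) : 'cV[R]_n :=
  \col_k ((k == i)%:R - (k == j)%:R).

Definition Ahat (A : 'M[R]_n) (i j : 'I_n) : 'M[R]_n :=
  A + A i j *: (evec i j *m (evec i j)^T).

Definition Kr (A : 'M[R]_n) (r : R) (B : 'M[R]_n) : R :=
  let Dmh := diagf (fun k => (Num.sqrt (deg A k))^-1) in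
  let Dh := diagf (fun k => Num.sqrt (deg A k)) in
  \tr (invmx ((1 + r)%:M - Dmh *m B *m Dmh
              + (vol A)^-1 *: (Dh *m ones *m ones^T *m Dh)))
  - (1 + r)^-1.

Definition cr (A : 'M[R]_n) (r : R) (i j : 'I_n) : R :=
  Kr A r (Ahat A i j) - Kr A r A.

End Defs.

(* Main.v *)
Require Import Defs.
From HB Require Import structures.
From mathcomp Require Import all_boot all_order all_algebra.
From mathcomp Require Import ring lra.
Set Implicit Arguments. Unset Strict Implicit. Unset Printing Implicit Defensive.
Import Order.TTheory GRing.Theory Num.Theory.
Local Open Scope ring_scope.

Section H.
Variable (R : rcfType).

Lemma sqmx_sum (n : nat) (z : 'cV[R]_n) : (z^T *m z) 0 0 = \sum_k z k 0 ^+ 2.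
Proof. by rewrite mxE; apply: eq_bigr => k _; rewrite !mxE expr2. Qed.

Lemma sqmx_ge0 (n : nat) (z : 'cV[R]_n) : 0 <= (z^T *m z) 0 0.
Proof. by rewrite sqmx_sum sumr_ge0 // => k _; rewrite sqr_ge0. Qed.

Lemma pd_unit (n : nat) (M : 'M[R]_n) (r : R) : 0 < r ->
  (forall x : 'cV_n, r * (x^T *m x) 0 0 <= (x^T *m M *m x) 0 0) ->
  M \in unitmx.
Proof.
move=> r0 H.
rewrite -unitmx_tr -row_free_unit -kermx_eq0; apply/eqP/matrixP => k l.
set K := kermx M^T.
pose x := (row k K)^T.
have Mx0 : M *m x = 0.
  by rewrite -[M]trmxK -trmx_mul -row_mul mulmx_ker row0 trmx0.
have := H x; rewrite -mulmxA Mx0 mulmx0 [X in _ <= X]mxE => Hle.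
have hs : \sum_k0 x k0 0 ^+ 2 = 0.
  apply/eqP; rewrite eq_le sumr_ge0 ?andbT; last by move=> *; rewrite sqr_ge0.
  by rewrite -sqmx_sum -(pmulr_rle0 _ r0).
have := psumr_eq0P (fun i _ => sqr_ge0 (x i 0)) hs (i:=l) isT.
by move/eqP; rewrite sqrf_eq0 /x !mxE => /eqP.
Qed.


Lemma key (n : nat) (M Mh : 'M[R]_n) (w : 'cV_n) (a r : R) :
  0 < a -> 0 < r -> M = Mh + a *: (w *m w^T) -> M^T = M -> Mh^T = Mh ->
  (forall x : 'cV_n, r * (x^T *m x) 0 0 <= (x^T *m M *m x) 0 0) ->
  (forall x : 'cV_n, r * (x^T *m x) 0 0 <= (x^T *m Mh *m x) 0 0) ->
  \tr (invmx Mh) - \tr (invmx M) <= r^-1.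
Proof.
move=> a0 r0 hM sM sMh bM bMh.
have uM := pd_unit r0 bM; have uMh := pd_unit r0 bMh.
set Mi := invmx M; set Mhi := invmx Mh.
have hP : Mhi - Mi = Mhi *m (a *: (w *m w^T)) *m Mi.
  have -> : a *: (w *m w^T) = M - Mh by rewrite hM addrC addKr.
  by rewrite /Mhi /Mi mulmxBr mulmxBl mulVmx // mul1mx -mulmxA mulmxV // mulmx1.
set p := Mhi *m w; set q := Mi *m w.
have hwMi : w^T *m Mi = q^T by rewrite /q trmx_mul trmx_inv sM.
have htr : \tr (Mhi) - \tr Mi = a * (q^T *m p) 0 0.
  rewrite -linearB /= hP -scalemxAr -scalemxAl mxtraceZ; congr (_ * _).
  rewrite !mulmxA -(mulmxA (Mhi *m w)).
  by rewrite mxtrace_mulC hwMi trace_mx11 -mulmxA.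
set t := (w^T *m p) 0 0.
have hMhp : Mh *m p = w by rewrite /p /Mhi mulmxA mulmxV // mul1mx.
have ht : t = (p^T *m Mh *m p) 0 0.
  by rewrite /t -{1}hMhp trmx_mul sMh.
have hp : p = (1 + a * t) *: q.
  have hMp : M *m p = (1 + a * t) *: w.
    rewrite hM mulmxDl hMhp -scalemxAl -mulmxA (mx11_scalar (w^T *m p)) -/t.
    by rewrite mul_mx_scalar scalerA scalerDl scale1r.
  by rewrite /q /Mi scalemxAr -hMp mulmxA mulVmx // mul1mx.
set S := (q^T *m q) 0 0.
have S0 : 0 <= S by apply: sqmx_ge0.
have hpp : (p^T *m p) 0 0 = (1 + a * t) ^+ 2 * S.
  rewrite hp linearZ /=.
  by rewrite linearZ /= -scalemxAl scalerA mxE -/S expr2.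
have hqp : (q^T *m p) 0 0 = (1 + a * t) * S.
  by rewrite hp -scalemxAr mxE.
have hb := bMh p; rewrite -ht hpp in hb.
rewrite htr hqp.
have t0 : 0 <= t.
  apply: le_trans hb; apply: mulr_ge0; first exact: ltW.
  by apply: mulr_ge0 => //; rewrite sqr_ge0.
set X := a * ((1 + a * t) * S).
have X0 : 0 <= X.
  apply: mulr_ge0; [exact: ltW| apply: mulr_ge0 => //; apply: addr_ge0 => //; apply: mulr_ge0 => //; exact: ltW].
have hat : (1 + a * t) * (r * X) <= a * t.
  rewrite /X; have := ler_wpM2l (ltW a0) hb.
  by apply: le_trans; rewrite le_eqVlt; apply/orP; left; apply/eqP; ring.
have h1 : 0 < 1 + a * t by rewrite ltr_pwDl // mulr_ge0 // ltW.
have hrX : r * X <= 1.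
  rewrite -(ler_pM2l h1) mulr1; apply: le_trans hat _; lra.
by rewrite -(ler_pM2l r0) mulfV ?gt_eqF.
Qed.

Lemma core (n : nat) (B : 'M[R]_n) (y : 'I_n -> R) :
  (forall k l, B k l = B l k) -> (forall k l, 0 <= B k l) ->
  \sum_l \sum_k y k * B k l * y l <= \sum_k (\sum_l B k l) * y k ^+ 2.
Proof.
move=> sB pB.
have h1 : \sum_l \sum_k B k l * y l ^+ 2 = \sum_k (\sum_l B k l) * y k ^+ 2.
  apply: eq_bigr => l _; rewrite -mulr_suml; congr (_ * _).
  by apply: eq_bigr => k _; exact: sB.
have h2 : \sum_l \sum_k B k l * y k ^+ 2 = \sum_k (\sum_l B k l) * y k ^+ 2.
  by rewrite exchange_big; apply: eq_bigr => k _; rewrite mulr_suml.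
have h0 : 0 <= \sum_l \sum_k B k l * (y k - y l) ^+ 2.
  by apply: sumr_ge0 => l _; apply: sumr_ge0 => k _; rewrite mulr_ge0 ?sqr_ge0.
have hE : \sum_l \sum_k B k l * (y k - y l) ^+ 2 =
   \sum_l \sum_k B k l * y k ^+ 2 + \sum_l \sum_k B k l * y l ^+ 2
   - 2 * \sum_l \sum_k y k * B k l * y l.
  rewrite -big_split /= mulr_sumr -sumrB; apply: eq_bigr => l _.
  rewrite -big_split /= mulr_sumr -sumrB; apply: eq_bigr => k _; ring.
move: h0; rewrite hE h1 h2; lra.
Qed.

Lemma quadE (n : nat) (B : 'M[R]_n) (y : 'cV[R]_n) :
  (y^T *m B *m y) 0 0 = \sum_l \sum_k y k 0 * B k l * y l 0.
Proof.
rewrite mxE; apply: eq_bigr => l _; rewrite mxE mulr_suml.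
by apply: eq_bigr => k _; rewrite !mxE.
Qed.
End H.

Lemma maddE (R : rcfType) m p (X Y : 'M[R]_(m, p)) a b : (X + Y) a b = X a b + Y a b.
Proof. by rewrite mxE. Qed.
Lemma moppE (R : rcfType) m p (X : 'M[R]_(m, p)) a b : (- X) a b = - X a b.
Proof. by rewrite mxE. Qed.
Lemma mscaleE (R : rcfType) m p (c : R) (X : 'M[R]_(m, p)) a b : (c *: X) a b = c * X a b.
Proof. by rewrite mxE. Qed.

Section G.
Variables (R : rcfType) (n : nat).

Definition Mx (A : 'M[R]_n) (r : R) (B : 'M[R]_n) : 'M[R]_n :=
  let Dmh := diagf (fun k => (Num.sqrt (deg A k))^-1) in
  let Dh := diagf (fun k => Num.sqrt (deg A k)) in
  (1 + r)%:M - Dmh *m B *m Dmh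
              + (vol A)^-1 *: (Dh *m ones R n *m (ones R n)^T *m Dh).

Lemma KrE (A : 'M[R]_n) (r : R) (B : 'M[R]_n) : Kr A r B = \tr (invmx (Mx A r B)) - (1 + r)^-1.
Proof. by []. Qed.

Lemma Mx_sym (A : 'M[R]_n) (r : R) (B : 'M[R]_n) : (forall k l, B k l = B l k) -> (Mx A r B)^T = Mx A r B.
Proof.
move=> sB; have eB : B^T = B by apply/matrixP => k l; rewrite mxE.
rewrite /Mx /diagf linearD linearB /= tr_scalar_mx linearZ /=.
by rewrite !trmx_mul !tr_diag_mx trmxK eB !mulmxA.
Qed.

Lemma Mx_bound (A : 'M[R]_n) (r : R) (B : 'M[R]_n) : 0 < r -> (forall k, 0 < deg A k) ->
  (forall k l, B k l = B l k) -> (forall k l, 0 <= B k l) ->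
  (forall k, \sum_l B k l = deg A k) ->
  forall x : 'cV_n, r * (x^T *m x) 0 0 <= (x^T *m Mx A r B *m x) 0 0.
Proof.
move=> r0 dpos sB pB rB x.
rewrite /Mx mulmxDr mulmxBr mulmxDl mulmxBl !maddE moppE.
set D1 := diagf _; set Dh := diagf _.
have T1 : (x^T *m (1 + r)%:M *m x) 0 0 = (1 + r) * (x^T *m x) 0 0.
  by rewrite mul_mx_scalar -scalemxAl mscaleE.
have T3 : 0 <= (x^T *m ((vol A)^-1 *: (Dh *m ones R n *m (ones R n)^T *m Dh)) *m x) 0 0.
  have vol0 : 0 <= vol A by rewrite sumr_ge0 // => k _; rewrite ltW.
  rewrite -scalemxAr -scalemxAl mscaleE mulr_ge0 ?invr_ge0 //.
  have -> : x^T *m (Dh *m ones R n *m (ones R n)^T *m Dh) *m x =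
     ((ones R n)^T *m Dh *m x)^T *m ((ones R n)^T *m Dh *m x).
    by rewrite !trmx_mul /Dh /diagf tr_diag_mx trmxK !mulmxA.
  exact: sqmx_ge0.
have T2 : (x^T *m (D1 *m B *m D1) *m x) 0 0 <= (x^T *m x) 0 0.
  have -> : x^T *m (D1 *m B *m D1) *m x = (D1 *m x)^T *m B *m (D1 *m x).
    by rewrite trmx_mul /D1 /diagf tr_diag_mx !mulmxA.
  rewrite quadE; apply: le_trans (core (fun k => (D1 *m x) k 0) sB pB) _.
  rewrite sqmx_sum le_eqVlt; apply/orP; left; apply/eqP; apply: eq_bigr => k _.
  rewrite rB /D1 /diagf mul_diag_mx !mxE.
  have dk := dpos k.
  have sk : Num.sqrt (deg A k) != 0 by rewrite gt_eqF // sqrtr_gt0.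
  rewrite -{1}(sqr_sqrtr (ltW dk)); field; exact: sk.
rewrite T1; lra.
Qed.


Lemma Ahat_entry (A : 'M[R]_n) (i j k l : 'I_n) :
  Ahat A i j k l = A k l + A i j * (((k == i)%:R - (k == j)%:R) * ((l == i)%:R - (l == j)%:R)).
Proof. by rewrite /Ahat !mxE big_ord1 !mxE. Qed.

Lemma Ahat_ge0 (A : 'M[R]_n) (i j : 'I_n) :
  (forall k l, A k l = A l k) -> (forall k l, 0 <= A k l) -> i != j ->
  forall k l, 0 <= Ahat A i j k l.
Proof.
move=> sA pA ij k l; have ji : j != i by rewrite eq_sym.
rewrite Ahat_entry; move: (pA k l) (pA i j).
case: (eqVneq k i) => [->|ki].
  case: (eqVneq l i) => [->|li].
    by rewrite ?eqxx ?(negbTE ij) ?(negbTE ji) ?(negbTE ij) /=; lra.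
  case: (eqVneq l j) => [->|lj].
    by rewrite ?eqxx ?(negbTE ij) ?(negbTE ji) ?(negbTE ij) ?(negbTE ji) /=; lra.
  by rewrite ?eqxx ?(negbTE ij) ?(negbTE ji) ?(negbTE ij) ?(negbTE li) ?(negbTE lj) /=; lra.
case: (eqVneq k j) => [->|kj].
  case: (eqVneq l i) => [->|li].
    by rewrite ?eqxx ?(negbTE ij) ?(negbTE ji) ?(negbTE ji) ?(sA j i) /=; lra.
  case: (eqVneq l j) => [->|lj].
    by rewrite ?eqxx ?(negbTE ij) ?(negbTE ji) ?(negbTE ji) /=; lra.
  by rewrite ?eqxx ?(negbTE ij) ?(negbTE ji) ?(negbTE ji) ?(negbTE li) ?(negbTE lj) /=; lra.
by rewrite ?(negbTE ki) ?(negbTE kj) /=; nra.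
Qed.

Lemma Ahat_sym (A : 'M[R]_n) (i j : 'I_n) :
  (forall k l, A k l = A l k) -> forall k l, Ahat A i j k l = Ahat A i j l k.
Proof. by move=> sA k l; rewrite !Ahat_entry sA [X in _ * X]mulrC. Qed.

Lemma sum_eq1 (i : 'I_n) : \sum_(l < n) ((l == i)%:R : R) = 1.
Proof. by rewrite (bigD1 i) //= eqxx big1 ?addr0 // => l /negbTE ->. Qed.

Lemma Ahat_row (A : 'M[R]_n) (i j : 'I_n) k : \sum_l Ahat A i j k l = deg A k.
Proof.
under eq_bigr do rewrite Ahat_entry.
rewrite big_split /= -mulr_sumr -mulr_sumr sumrB !sum_eq1 subrr !mulr0 addr0.
by [].
Qed.
End G.

Theorem theorem10 (R : rcfType) (n : nat) (A : 'M[R]_n) (i j : 'I_n) :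
  symmetric_nonneg A ->
  connected_graph A ->
  (forall k, 0 < deg A k) ->
  i != j -> 0 < A i j ->
  cut_edge A i j ->
  forall r : R, 0 < r -> cr A r i j <= r^-1.
Proof.
move=> [hT pA] _ dpos ij aij _ r r0.
have sA : forall k l, A k l = A l k by move=> k l; rewrite -{1}hT mxE.
rewrite /cr !KrE.
suff : \tr (invmx (Mx A r (Ahat A i j))) - \tr (invmx (Mx A r A)) <= r^-1.
  by rewrite opprB addrA subrK.
pose D1 := diagf (fun k => (Num.sqrt (deg A k))^-1).
apply: (key (w := D1 *m evec R i j) aij r0).
- have hw : D1 *m (A i j *: (evec R i j *m (evec R i j)^T)) *m D1 =
            A i j *: (D1 *m evec R i j *m (D1 *m evec R i j)^T).
    by rewrite trmx_mul /D1 /diagf tr_diag_mx -scalemxAr -scalemxAl !mulmxA.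
  rewrite /Mx /= /Ahat mulmxDr mulmxDl -/D1 hw.
  apply/matrixP => a b; rewrite !(maddE, moppE); ring.
- by apply: Mx_sym.
- by apply: Mx_sym; apply: Ahat_sym.
- by apply: Mx_bound.
- apply: Mx_bound => //; [exact: Ahat_sym | exact: Ahat_ge0 | exact: Ahat_row].
Qed.
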